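(* Let $\mathcal{G}=(V,E_1,\dots,E_T)$ be an always connected broadcast network with $n=|V|$ vertices, and let $\delta=\min_{v\in V}\Delta(v)$. Then $\mathcal{G}$ can be explored in $(\delta+1)(2n-3)$ timesteps, i.e. there is a temporal walk exploring $\mathcal{G}$ of length at most $(\delta+1)(2n-3)$.
   Context: A directed temporal graph $\mathcal{G}=(V,E_1,\dots,E_T)$ consists of a finite vertex set $V$ and an ordered sequence of sets $E_1,\dots,E_T$ of directed edges on $V$ (timesteps); $T$ is the lifetime; an edge $e$ is active at $t$ if $e\in E_t$; the underlying graph is $U(\mathcal{G})=(V,\bigcup_t E_t)$, assumed symmetric. $N(v)=\{u:(v,u)$ is an edge of $U(\mathcal{G})\}$ and $\Delta(v)=|N(v)|$. Write $[i,j]=\{i,\dots,j\}$. Such a $\mathcal{G}$ is a broadcast network if: (1) for every $v\in V$ and $t$, either all out-edges $\{(v,u):u\in N(v)\}$ belong to $E_t$ or none does; say $v$ is active at $t$ in the former case; (2) for all $t_1<t_2$, $v$ can be active at both $t_1$ and $t_2$ only if every $u\in N(v)$ is active at some timestep in $[t_1,t_2-1]$. It is always connected if each static graph $(V,E_t)$, $t\in[1,T]$, is connected. A temporal walk is a sequence $((v_{i_1},v_{i_2}),t_1),\dots,((v_{i_{m-1}},v_{i_m}),t_{m-1})$ of directed edges traversed in their orientation forming a walk in $U(\mathcal{G})$, each edge $(v_{i_j},v_{i_{j+1}})$ active at timestep $t_j$, with $t_1<\dots<t_{m-1}$; its length is $t_{m-1}$; it explores $\mathcal{G}$ if every vertex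 belongs to some edge of the walk. *)

(* Defs.v *)
From mathcomp Require Import all_boot.
Set Implicit Arguments. Unset Strict Implicit. Unset Printing Implicit Defensive.

Section TemporalGraphs.
Variable V : finType.

(* A directed temporal graph with lifetime T: timestep t (1 <= t <= T)
   has edge set [E t]; values of E outside [1,T] are irrelevant. *)

Definition uedge (T : nat) (E : nat -> rel V) (u v : V) : bool :=
  has (fun t => E t u v) (iota 1 T).

Definition nbhd (T : nat) (E : nat -> rel V) (v : V) : {set V} :=
  [set u | uedge T E v u].
Definition deg (T : nat) (E : nat -> rel V) (v : V) : nat := #|nbhd T E v|.

Definition no_loops (T : nat) (E : nat -> rel V) : Prop :=
  forall t v, 1 <= t <= T -> ~~ E t v v.

Definition underlying_symmetric (T : nat) (E : nat -> rel V) : Prop :=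
  forall u v, uedge T E u v -> uedge T E v u.

Definition active (T : nat) (E : nat -> rel V) (v : V) (t : nat) : bool :=
  [forall u in nbhd T E v, E t v u].

Definition broadcast_network (T : nat) (E : nat -> rel V) : Prop :=
  (forall v t, 1 <= t <= T ->
     active T E v t \/ (forall u, u \in nbhd T E v -> ~~ E t v u)) /\
  (forall v t1 t2, 1 <= t1 -> t1 < t2 -> t2 <= T ->
     active T E v t1 -> active T E v t2 ->
     forall u, u \in nbhd T E v ->
       exists2 t, t1 <= t <= t2.-1 & active T E u t).

Definition always_connected (T : nat) (E : nat -> rel V) : Prop :=
  forall t, 1 <= t <= T ->
    forall u v, connect (fun x y => E t x y || E t y x) u v.

(* A temporal walk starting at vertex x, given as the list of steps
   (next vertex, timestep), with strictly increasing timesteps in [1,T]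
   (the previous time starts at 0) and each edge active at its time. *)
Fixpoint temporal_walk (T : nat) (E : nat -> rel V) (x : V) (t0 : nat)
    (s : seq (V * nat)) : bool :=
  match s with
  | [::] => true
  | (y, t) :: s' => [&& t0 < t, t <= T, E t x y & temporal_walk T E y t s']
  end.

Definition walk_length (s : seq (V * nat)) : nat := last 0 (map snd s).

Definition explores (x : V) (s : seq (V * nat)) : bool :=
  (s != [::]) && [forall v, v \in x :: map fst s].

End TemporalGraphs.

(* Main.v *)
Require Import Defs.
From mathcomp Require Import all_boot zify.
Set Implicit Arguments. Unset Strict Implicit. Unset Printing Implicit Defensive.

Ltac bsolve := rewrite ?(inE, mem_rcons, mem_cat, rcons_cons, cat_cons) /=;
  repeat (match goal with
          | |- context [?a == ?b] => case: (a == b)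
          | |- context [?a \in ?b] => case: (a \in b)
          end); by [].

Section Grow.
Variable V : finType.
Variable adj : rel V.
Hypothesis adj_sym : forall x y, adj x y -> adj y x.
Variable f : V -> nat.
Hypothesis f_lip : forall x y, adj x y -> f x <= f y + 1.
Variable w : V.
Hypothesis cross : forall S : {set V}, w \in S -> (exists r, r \notin S) ->
  exists q r, [/\ q \in S, r \notin S & adj q r].

Definition wset (p : seq V) (e : V) : {set V} := [set x | x \in w :: rcons p e].

Definition inv (p : seq V) (e : V) : Prop :=
  path adj w (rcons p e) /\ size p + 4 + f w <= 2 * #|wset p e| + f (last w p).

Lemma grow_step p e r : inv p e -> r \notin wset p e ->
  (exists q, q \in wset p e /\ adj q r) ->
  exists p' e', inv p' e' /\ #|wset p' e'| = #|wset p e| + 1.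
Proof.
move=> [hp hs] rn [q [qin aqr]].
have cardr : forall l : seq V, (forall x, (x \in l) = (x == r) || (x \in w :: rcons p e)) ->
   #|[set x | x \in l]| = #|wset p e| + 1.
  move=> l hl.
  have -> : [set x | x \in l] = r |: wset p e.
    by apply/setP=> x; rewrite !inE hl.
  by rewrite cardsU1 rn addnC.
case: (boolP (q \in w :: p)) => qwp.
- rewrite in_cons in qwp; case/orP: qwp => [/eqP qw | qp].
  + subst q. exists (r :: w :: p), e; split; last first.
      by apply: cardr => x; bsolve.
    split; first by rewrite rcons_cons /= aqr adj_sym.
    have -> : wset (r :: w :: p) e = r |: wset p e.
      by apply/setP=> x; bsolve.
    rewrite cardsU1 rn /=. lia.
  + case/splitPr: qp hp hs rn qin cardr => p1 p2 hp hs rn qin cardr.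
    exists (p1 ++ q :: r :: q :: p2), e; split; last first.
      by apply: cardr => x; bsolve.
    split.
      move: hp; rewrite !rcons_cat !cat_path /= => /andP [-> /andP [-> ->]].
      by rewrite aqr adj_sym.
    have -> : wset (p1 ++ q :: r :: q :: p2) e = r |: wset (p1 ++ q :: p2) e.
      by apply/setP=> x; bsolve.
    rewrite cardsU1 rn /= !last_cat /=.
    move: hs; rewrite !last_cat /= !size_cat /=. lia.
- have qe : q = e.
    move: qin; rewrite inE /= -cats1 in_cons mem_cat inE.
    move: qwp; rewrite in_cons negb_or => /andP [/negbTE -> /negbTE ->] /=.
    by move/eqP.
  subst q.
  exists (rcons p e), r; split; last first.
    by apply: cardr => x; bsolve.
  split; first by rewrite rcons_path hp last_rcons.
  have -> : wset (rcons p e) r = r |: wset p e.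
    by apply/setP=> x; bsolve.
  rewrite cardsU1 rn last_rcons size_rcons /=.
  have hl : f (last w p) <= f e + 1.
    by apply: f_lip; move: hp; rewrite rcons_path => /andP [].
  lia.
Qed.

Lemma grow_all : 1 < #|V| -> exists p e, inv p e /\ wset p e = setT.
Proof.
move=> n2.
have base : exists p e, inv p e /\ 2 <= #|wset p e|.
  have [r rn] : exists r, r \notin [set w].
    case: (pickP [pred x | x != w]) => [r /= hr | hn]; first by exists r; rewrite inE.
    have : #|V| <= 1.
      rewrite -(cards1 w); apply: subset_leq_card; apply/subsetP => x _.
      by rewrite inE; move: (hn x) => /= /negbFE.
    lia.
  have [q [r' [qin rn' aqr]]] := cross (set11 w) (ex_intro _ r rn).
  move: qin; rewrite inE => /eqP qw; subst q.
  have hrw : r' != w by move: rn'; rewrite inE.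
  have c2 : #|wset [::] r'| = 2.
    have -> : wset [::] r' = [set w; r'] by apply/setP => x; bsolve.
    by rewrite cards2 eq_sym hrw.
  exists [::], r'; split; last by rewrite c2.
  split; first by rewrite /= aqr.
  rewrite c2 /=. lia.
have step : forall k, exists p e, inv p e /\ (k + 2 <= #|wset p e| \/ wset p e = setT).
  elim=> [|k [p [e [hi hk]]]].
    by have [p [e [hi h2]]] := base; exists p, e; split => //; left.
  case: hk => [hk | hT]; last by exists p, e; split => //; right.
  case: (pickP [pred x | x \notin wset p e]) => [r /= hr | hn]; last first.
    exists p, e; split => //; right; apply/setP => x; rewrite in_setT.
    by move: (hn x) => /= /negbFE.
  have wS : w \in wset p e by rewrite inE mem_head.
  have [q [r' [qin rn' aqr]]] := cross wS (ex_intro _ r hr).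
  have [p' [e' [hi' hc]]] := grow_step hi rn' (ex_intro _ q (conj qin aqr)).
  exists p', e'; split => //; left; rewrite hc. lia.
have [p [e [hi [hk | hT]]]] := step #|V|; last by exists p, e.
have := subset_leq_card (subsetT (wset p e)); rewrite cardsT. lia.
Qed.

End Grow.

Section Main.
Variable V : finType.
Variable T : nat.
Variable E : nat -> rel V.
Hypothesis hsym : underlying_symmetric T E.
Hypothesis hbc : broadcast_network T E.
Hypothesis hcon : always_connected T E.
Hypothesis hn : 1 < #|V|.

Definition cnt v t := count (active T E v) (iota 1 t).

Lemma cnt0 v : cnt v 0 = 0.
Proof. by []. Qed.

Lemma cntS v t : cnt v t.+1 = cnt v t + active T E v t.+1.
Proof.
rewrite /cnt; have -> : iota 1 t.+1 = iota 1 t ++ [:: t.+1] by rewrite -(addn1 t) iotaD add1n addn1.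
by rewrite count_cat /= addn0.
Qed.

Lemma cnt_mono v s t : s <= t -> cnt v s <= cnt v t.
Proof.
move=> /subnK <-; elim: (t - s) => [|k IH] //.
rewrite addSn cntS; lia.
Qed.

Lemma act_cnt v r t : 1 <= r <= t -> active T E v r -> cnt v r.-1 < cnt v t.
Proof.
case: r => [|r] // /andP [_ rt] ar /=.
have := cnt_mono v rt; rewrite cntS ar; lia.
Qed.

Lemma last_act v t : 0 < cnt v t ->
  exists s, [/\ 1 <= s <= t, active T E v s & cnt v s = cnt v t].
Proof.
elim: t => [|t IH] //.
case: (boolP (active T E v t.+1)) => a.
  by move=> _; exists t.+1; rewrite a leqnn.
rewrite cntS (negbTE a) addn0 => /IH [s [/andP [s1 st] hacts cs]].
exists s; split => //.
by rewrite s1 (leq_trans st).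
Qed.

Lemma uedgeE x y t : 1 <= t <= T -> E t x y -> uedge T E x y.
Proof. by move=> ht hE; apply/hasP; exists t; rewrite // mem_iota; lia. Qed.

Lemma nbhd_sym u v : v \in nbhd T E u -> u \in nbhd T E v.
Proof. by rewrite !inE; apply: hsym. Qed.

Lemma lip u v t : v \in nbhd T E u -> t <= T -> cnt u t <= cnt v t.-1 + 1.
Proof.
move=> huv; elim/ltn_ind: t => t IH tT.
case: t IH tT => [|t] IH tT; first by rewrite cnt0.
rewrite cntS /=.
case: (boolP (active T E u t.+1)) => au /=.
- case: (posnP (cnt u t)) => [-> | cpos]; first lia.
  have [s [/andP [s1 st] hacts cs]] := last_act cpos.
  have [r /andP [sr rt] ar] := hbc.2 u s t.+1 s1 (leq_ltn_trans st (ltnSn t)) tT hacts au v huv.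
  have h1 := IH s (leq_ltn_trans st (ltnSn t)) (leq_trans st (ltnW tT)).
  have h2 := act_cnt (v := v) (r := r) (t := t) (ltac:(apply/andP; split; lia)) ar.
  have h3 := cnt_mono v (s := s.-1) (t := r.-1) (ltac:(lia)).
  lia.
- rewrite addn0.
  have := IH t (ltnSn t) (ltnW tT).
  have := cnt_mono v (s := t.-1) (t := t) (leq_pred t).
  lia.
Qed.

Lemma lipw u v t : v \in nbhd T E u -> t <= T -> cnt u t <= cnt v t + 1.
Proof.
move=> huv tT; have := lip huv tT.
have := cnt_mono v (s := t.-1) (t := t) (leq_pred t); lia.
Qed.

Lemma other (w : V) : exists z, z != w.
Proof.
case: (pickP [pred x | x != w]) => [r /= hr | hn']; first by exists r.
have : #|V| <= 1.
  rewrite -(cards1 w); apply: subset_leq_card; apply/subsetP => x _.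
  by rewrite inE; move: (hn' x) => /= /negbFE.
lia.
Qed.

Lemma nbr_active w t : 1 <= t <= T -> ~~ active T E w t ->
  exists2 u, u \in nbhd T E w & active T E u t.
Proof.
move=> ht naw.
have [z zw] := other w.
have /connectP [p pth lst] := hcon ht w z.
case: p pth lst => [|y p] /=; first by move=> _ hz; rewrite hz eqxx in zw.
move=> /andP [/orP [hE | hE] _] _.
- have yn : y \in nbhd T E w by rewrite inE; exact: uedgeE ht hE.
  case: (hbc.1 w t ht) => [aw | hno]; first by rewrite aw in naw.
  by move: (hno y yn); rewrite hE.
- have wn : w \in nbhd T E y by rewrite inE; exact: uedgeE ht hE.
  exists y; first exact: nbhd_sym.
  case: (hbc.1 y t ht) => [// | hno].
  by move: (hno w wn); rewrite hE.
Qed.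

Lemma window w a : a + (deg T E w).+1 <= T ->
  exists2 s, a < s <= a + (deg T E w).+1 & active T E w s.
Proof.
set d := deg T E w => hT.
case: (boolP [exists i : 'I_d.+1, active T E w (a + i.+1)]) => [/existsP [i ai] | /existsPn hno].
  exists (a + i.+1) => //; have := ltn_ord i; lia.
pose g (i : 'I_d.+1) := odflt w [pick u in nbhd T E w | active T E u (a + i.+1)].
have gP : forall i, g i \in nbhd T E w /\ active T E (g i) (a + i.+1).
  move=> i; rewrite /g; case: pickP => [u /andP [h1 h2] | hnone] //=.
  have hi := ltn_ord i.
  have [u hu au] := nbr_active (t := a + i.+1) (ltac:(apply/andP; split; lia)) (hno i).
  by move: (hnone u); rewrite /= hu au.
have noact : forall r, a < r <= a + d.+1 -> ~~ active T E w r.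
  move=> r hr.
  have hk : r - a - 1 < d.+1 by lia.
  have := hno (Ordinal hk); rewrite /=.
  by have -> : a + (r - a - 1).+1 = r by lia.
have key : forall i j : 'I_d.+1, (i < j)%N -> g i != g j.
  move=> i j lij; apply/negP => /eqP gij.
  have [hi ai] := gP i; have [hj aj] := gP j.
  rewrite -gij in aj.
  have hj' := ltn_ord j.
  have [r /andP [r1 r2] ar] := hbc.2 (g i) (a + i.+1) (a + j.+1) (ltac:(lia)) (ltac:(lia)) (ltac:(lia)) ai aj w (nbhd_sym hi).
  by move: (noact r (ltac:(apply/andP; split; lia))); rewrite ar.
have ginj : injective g.
  move=> i j hij; case: (ltngtP i j) => [lt | lt | eq].
  - by move: (key i j lt); rewrite hij eqxx.
  - by move: (key j i lt); rewrite hij eqxx.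
  - exact: val_inj.
have : #|g @: [set: 'I_d.+1]| <= d.
  rewrite /d /deg; apply: subset_leq_card; apply/subsetP => x /imsetP [i _ ->].
  exact: (gP i).1.
rewrite card_imset // cardsT card_ord. lia.
Qed.

Lemma cnt_w w j : j * (deg T E w).+1 <= T -> j <= cnt w (j * (deg T E w).+1).
Proof.
elim: j => [|j IH] // hT.
rewrite mulSn in hT *.
have [s /andP [s1 s2] hacts] := window (w := w) (a := j * (deg T E w).+1) (ltac:(lia)).
have h1 := IH (ltac:(lia)).
have h2 := act_cnt (v := w) (r := s) (t := (deg T E w).+1 + j * (deg T E w).+1) (ltac:(apply/andP; split; lia)) hacts.
have h3 := cnt_mono w (s := j * (deg T E w).+1) (t := s.-1) (ltac:(lia)).
lia.
Qed.

Lemma first_time v t0 k t : cnt v t0 < k -> k <= cnt v t ->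
  exists tau, [/\ t0 < tau <= t, active T E v tau, cnt v tau = k & cnt v tau.-1 = k.-1].
Proof.
move=> h0; elim: t => [|t IH]; first by rewrite cnt0; lia.
case: (leqP k (cnt v t)) => hk.
  by move=> _; have [tau [/andP [a b] c d e]] := IH hk; exists tau; split => //; lia.
rewrite cntS; case: (boolP (active T E v t.+1)) => a /= hk2; last by lia.
exists t.+1; split => //.
- apply/andP; split => //; rewrite ltnNge; apply/negP => ht.
  have := cnt_mono v ht; rewrite cntS a /=; lia.
- rewrite cntS a /=; lia.
- simpl; lia.
Qed.

Lemma path_cnt tstar : tstar <= T -> forall q x, path (uedge T E) x q ->
  cnt (last x q) tstar <= cnt x tstar + size q.
Proof.
move=> hT; elim=> [|y q IH] x //=; first by rewrite addn0.
move=> /andP [hxy hp].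
have := IH y hp.
have hyx : x \in nbhd T E y by apply: nbhd_sym; rewrite inE.
have := lipw hyx hT.
lia.
Qed.

Lemma last_nonnil (a b : nat) l : l != [::] -> last a l = last b l.
Proof. by case: l. Qed.

Lemma build tstar : tstar <= T -> forall p e x k t0,
  path (uedge T E) x (rcons p e) -> 0 < k -> cnt x t0 < k ->
  k + size p <= cnt (last x p) tstar ->
  exists s, [/\ temporal_walk T E x t0 s, map fst s = rcons p e & walk_length s <= tstar].
Proof.
move=> hT; elim=> [|y p IH] e x k t0 pth k0 ct0 hc.
- have [tau [/andP [t1 t2] a c1 c2]] := first_time (t := tstar) ct0 (ltac:(simpl in hc; lia)).
  exists [:: (e, tau)]; split => //=.
  rewrite t1 (leq_trans t2 hT) /= andbT.
  move: a => /forall_inP; apply.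
  by move: pth => /= /andP [h _]; rewrite inE.
- move: pth; rewrite rcons_cons /= => /andP [hxy pth].
  have hp : path (uedge T E) y p by move: pth; rewrite rcons_path => /andP [].
  have := path_cnt hT (q := y :: p) (x := x) (ltac:(by rewrite /= hxy hp)).
  rewrite /= in hc * => hpc.
  have [tau [/andP [t1 t2] a c1 c2]] := first_time (t := tstar) ct0 (ltac:(lia)).
  have cy : cnt y tau < k.+1.
    have hyx : x \in nbhd T E y by apply: nbhd_sym; rewrite inE.
    have := lip hyx (leq_trans t2 hT).
    lia.
  have [s' [hw hm hl]] := IH e y k.+1 tau pth (ltn0Sn _) cy (ltac:(lia)).
  exists ((y, tau) :: s'); split.
  + rewrite /= t1 (leq_trans t2 hT) hw /= andbT.
    move: a => /forall_inP; apply; by rewrite inE.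
  + by rewrite /= hm.
  + rewrite /walk_length /= (@last_nonnil tau 0) //.
    apply/eqP => h; move: (congr1 size hm) (congr1 size h).
    rewrite !size_map size_rcons /=; lia.
Qed.

End Main.

Lemma cross_path (V : finType) (r : rel V) (S : {set V}) p x :
  x \in S -> last x p \notin S -> path r x p ->
  exists q z, [/\ q \in S, z \notin S & r q z].
Proof.
elim: p x => [|y p IH] x /=; first by move=> -> .
move=> xS ln /andP [rxy pth].
case: (boolP (y \in S)) => yS; first exact: IH yS ln pth.
by exists x, y.
Qed.

Theorem theorem17 (V : finType) (T : nat) (E : nat -> rel V) (delta : nat) :
  no_loops T E ->
  underlying_symmetric T E ->
  broadcast_network T E ->
  always_connected T E ->
  2 <= #|V| ->
  (exists v : V, deg T E v = delta) ->
  (forall v : V, delta <= deg T E v) ->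
  (delta + 1) * (2 * #|V| - 3) <= T ->
  exists (x : V) (s : seq (V * nat)),
    [&& temporal_walk T E x 0 s, explores x s &
        walk_length s <= (delta + 1) * (2 * #|V| - 3)].
Proof.
move=> _ hsym hbc hcon hn [w hw] _ hT.
set tstar := (delta + 1) * (2 * #|V| - 3) in hT *.
have T1 : 1 <= T.
  apply: leq_trans hT; rewrite /tstar muln_gt0; apply/andP; split; lia.
have cross : forall S : {set V}, w \in S -> (exists r, r \notin S) ->
    exists q r, [/\ q \in S, r \notin S & uedge T E q r].
  move=> S wS [r rS].
  have ht : 1 <= 1 <= T by rewrite leqnn T1.
  have /connectP [p pth lst] := hcon 1 ht w r.
  have [q [z [qS zS hqz]]] := cross_path (r := fun x y => E 1 x y || E 1 y x) (p := p) wS (ltac:(by rewrite -lst)) pth.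
  exists q, z; split => //.
  case/orP: hqz => hE; first exact: uedgeE ht hE.
  by apply: hsym; exact: uedgeE ht hE.
have flip : forall x y, uedge T E x y -> cnt T E x tstar <= cnt T E y tstar + 1.
  by move=> x y hxy; apply: lipw => //; rewrite inE.
have [p [e [[pth hs] hset]]] := grow_all hsym flip cross hn.
have hcw : 2 * #|V| - 3 <= cnt T E w tstar.
  have e1 : (2 * #|V| - 3) * (deg T E w).+1 = tstar by rewrite hw /tstar addn1 mulnC.
  have := cnt_w hsym hbc hcon hn (w := w) (j := 2 * #|V| - 3).
  by rewrite e1 => /(_ hT).
rewrite hset cardsT in hs.
have [s [hw1 hm hl]] := build hsym hbc hn hT (k := 1) (t0 := 0) pth (ltn0Sn 0) (ltac:(by [])) (ltac:(lia)).
exists w, s; apply/and3P; split => //.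
apply/andP; split.
  by apply/eqP => s0; rewrite s0 in hm; case: p {pth hs hset} hm.
apply/forallP => v.
have : v \in wset w p e by rewrite hset inE.
by rewrite inE hm.
Qed.
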